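(* Let $\varepsilon>0$, $w>0$, $\delta>0$, and run $\textsc{ApproxGeneral}(\varepsilon,\delta,w)$ with any $(1+w)$-approximate oracle. Then for every $i=1,\dots,\tau$, $$\alpha^L(i)\le\delta L\,e^{\varepsilon(1+w)f_i/\beta}.$$
   Context: Let $G=(V,E)$ be a finite directed graph with capacities $c:E\to\mathbb{R}_{>0}$, edge lengths $\ell:E\to\mathbb{Z}_{\ge1}$, distinct vertices $s,t$, and a positive integer $L$. Let $\mathcal{P}_L$ be the set of directed simple $s$-$t$ paths $P$ with $\ell(P)=\sum_{e\in P}\ell(e)\le L$, and assume $\mathcal{P}_L\ne\emptyset$. For $y:E\to\mathbb{R}_{\ge0}$ let $y(P)=\sum_{e\in P}y(e)$ and $d^L_y(s,t)=\min_{P\in\mathcal{P}_L}y(P)$. Let $\beta$ be the optimum of the LP $\min\{\sum_e c(e)y(e): y\ge0,\ y(P)\ge1\ \forall P\in\mathcal{P}_L\}$. A $(1+w)$-approximate oracle ($w>0$) is a map $\mathcal{O}$ assigning to each $y:E\to\mathbb{R}_{\ge0}$ a path $\mathcal{O}(y)\in\mathcal{P}_L$ with $y(\mathcal{O}(y))\le(1+w)\,d^L_y(s,t)$. Algorithm $\textsc{ApproxGeneral}(\varepsilon,\delta,w)$: - Initialize $i=0$, $y_0\equiv\delta$, and $x_0\equiv0$. Let $\alpha^L(i)=d^L_{y_i}(s,t)$ and $\bar\alpha^L(i)=y_i(\mathcal{O}(y_i))$. - While $\bar\alpha^L(i)<1+w$: - set $i\leftarrow i+1$; - let $P_i=\mathcal{O}(y_{i-1})$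 and $c_i=\min_{e\in P_i}c(e)$; - set $x_i=x_{i-1}$ except $x_i(P_i)=x_{i-1}(P_i)+c_i$; - set $y_i(e)=y_{i-1}(e)(1+\varepsilon c_i/c(e))$ for $e\in P_i$, and $y_i(e)=y_{i-1}(e)$ otherwise. - Return $x_i$. $\tau$ is the number of iterations, and $f_i=\sum_Px_i(P)$. *)

(* Defs.v *)
From mathcomp Require Import all_boot.
From Stdlib Require Import Reals.
Set Implicit Arguments.
Unset Strict Implicit.
Unset Printing Implicit Defensive.

Definition rsum {T : Type} (s : seq T) (f : T -> R) : R :=
  foldr (fun x a => (f x + a)%R) 0%R s.

Section Graph.
Variables (V E : finType) (tl hd : E -> V).

(* P = [e1;...;ek] is a directed simple s-t path: tail e1 = s, head e_j = tail e_{j+1},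
   head ek = t, and the vertex sequence s, head e1, ..., head ek has no repetition. *)
Definition is_st_path (s t : V) (P : seq E) : bool :=
  [&& map tl P == belast s (map hd P), last s (map hd P) == t & uniq (s :: map hd P)].

Definition in_PL (ell : E -> nat) (s t : V) (L : nat) (P : seq E) : bool :=
  is_st_path s t P && (sumn (map ell P) <= L)%N.

Variables (ell : E -> nat) (s t : V) (L : nat).

Definition ylen (y : E -> R) (P : seq E) : R := rsum P y.

Definition is_dL (y : E -> R) (a : R) : Prop :=
  (exists P, in_PL ell s t L P /\ ylen y P = a) /\
  (forall P, in_PL ell s t L P -> (a <= ylen y P)%R).

Definition LP_feasible (y : E -> R) : Prop :=
  (forall e, (0 <= y e)%R) /\ (forall P, in_PL ell s t L P -> (1 <= ylen y P)%R).

Definition LP_cost (c : E -> R) (y : E -> R) : R := rsum (enum E) (fun e => (c e * y e)%R).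

Definition is_LP_opt (c : E -> R) (beta : R) : Prop :=
  (exists y, LP_feasible y /\ LP_cost c y = beta) /\
  (forall y, LP_feasible y -> (beta <= LP_cost c y)%R).

Definition approx_oracle (w : R) (O : (E -> R) -> seq E) : Prop :=
  forall y : E -> R, (forall e, (0 <= y e)%R) ->
    in_PL ell s t L (O y) /\
    (forall a, is_dL y a -> (ylen y (O y) <= (1 + w) * a)%R).

Definition path_cap (c : E -> R) (P : seq E) : R :=
  match P with
  | [::] => 0%R
  | e :: P' => foldr (fun e' m => Rmin (c e') m) (c e) P'
  end.

Variables (O : (E -> R) -> seq E) (c : E -> R) (eps delta : R).

(* y_i of ApproxGeneral (the sequence defined irrespective of the stopping test) *)
Fixpoint yseq (i : nat) : E -> R :=
  match i with
  | 0 => fun _ => delta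
  | i'.+1 =>
      let y := yseq i' in
      let P := O y in
      fun e => if e \in P then (y e * (1 + eps * path_cap c P / c e))%R else y e
  end.

Definition chosen (j : nat) : seq E := O (yseq j.-1).

Definition xflow (i : nat) (P : seq E) : R :=
  rsum (iota 1 i) (fun j => if chosen j == P then path_cap c (chosen j) else 0%R).

(* f_i = sum_P x_i(P); x_i vanishes outside {P_1,...,P_i} *)
Definition fval (i : nat) : R := rsum (undup (map chosen (iota 1 i))) (xflow i).

Definition alphabar (i : nat) : R := ylen (yseq i) (O (yseq i)).

End Graph.

(* Main.v *)
Require Import Defs.
From mathcomp Require Import all_boot.
From Stdlib Require Import Reals Lra Psatz.


Open Scope R_scope.

Lemma rsum_cons (T : Type) (x : T) s f : rsum (x :: s) f = f x + rsum s f.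
Proof. reflexivity. Qed.

Lemma rsum_cat (T : Type) (s1 s2 : seq T) f : rsum (s1 ++ s2) f = rsum s1 f + rsum s2 f.
Proof. elim: s1 => [|x s IH] /=; rewrite /rsum /= ?IH; [lra|]. rewrite -/(rsum _ _) IH /rsum; lra. Qed.

Lemma rsum_ext_in (T : eqType) (s : seq T) f g :
  (forall x, x \in s -> f x = g x) -> rsum s f = rsum s g.
Proof.
elim: s => [|x s IH] H //. rewrite !rsum_cons H ?mem_head // IH // => z Hz.
apply: H; by rewrite in_cons Hz orbT.
Qed.

Lemma rsum_ext (T : Type) (s : seq T) f g :
  (forall x, f x = g x) -> rsum s f = rsum s g.
Proof. move=> H; elim: s => [|x s IH] //; rewrite !rsum_cons H IH //. Qed.

Lemma rsum_plus (T : Type) (s : seq T) f g :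
  rsum s (fun x => f x + g x) = rsum s f + rsum s g.
Proof. elim: s => [|x s IH]; [rewrite /rsum /=; lra|]. rewrite !rsum_cons IH; lra. Qed.

Lemma rsum_minus (T : Type) (s : seq T) f g :
  rsum s (fun x => f x - g x) = rsum s f - rsum s g.
Proof. elim: s => [|x s IH]; [rewrite /rsum /=; lra|]. rewrite !rsum_cons IH; lra. Qed.

Lemma rsum_scal (T : Type) (s : seq T) k f :
  rsum s (fun x => k * f x) = k * rsum s f.
Proof. elim: s => [|x s IH]; [rewrite /rsum /=; lra|]. rewrite !rsum_cons IH; lra. Qed.

Lemma rsum_div (T : Type) (s : seq T) k f :
  rsum s (fun x => f x / k) = rsum s f / k.
Proof.
rewrite /Rdiv (@rsum_ext _ _ (fun x => f x * / k) (fun x => / k * f x)); last by move=> x; lra.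
rewrite rsum_scal; lra.
Qed.

Lemma rsum_le (T : Type) (s : seq T) f g :
  (forall x, f x <= g x) -> rsum s f <= rsum s g.
Proof. move=> H; elim: s => [|x s IH]; [rewrite /rsum /=; lra|]. rewrite !rsum_cons. have := H x; lra. Qed.

Lemma rsum_ge0 (T : Type) (s : seq T) f :
  (forall x, 0 <= f x) -> 0 <= rsum s f.
Proof. move=> H; elim: s => [|x s IH]; [rewrite /rsum /=; lra|]. rewrite !rsum_cons. have := H x; lra. Qed.

Lemma rsum_const (T : Type) (s : seq T) k : rsum s (fun _ => k) = k * INR (size s).
Proof. elim: s => [|x s IH]; [rewrite /rsum /=; lra|]. rewrite rsum_cons IH; change (size (x :: s)) with (size s).+1; rewrite S_INR; lra. Qed.

Lemma rsum_term (T : eqType) (s : seq T) f x :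
  (forall z, 0 <= f z) -> x \in s -> f x <= rsum s f.
Proof.
move=> H; elim: s => [|y s IH] //. rewrite in_cons rsum_cons => /orP [/eqP ->|Hx].
  have := @rsum_ge0 _ s f H; lra.
have := IH Hx; have := H y; lra.
Qed.

Lemma rsum_ind0 (T : eqType) (l : seq T) p g :
  p \notin l -> rsum l (fun e => if p == e then g else 0) = 0.
Proof.
elim: l => [|x l IH] //. rewrite in_cons negb_or => /andP [Hx Hl].
rewrite rsum_cons IH // (negbTE Hx); lra.
Qed.

Lemma rsum_ind1 (T : eqType) (l : seq T) p g :
  uniq l -> p \in l -> rsum l (fun e => if p == e then g else 0) = g.
Proof.
elim: l => [|x l IH] // /andP [Hx Hu]. rewrite in_cons rsum_cons => /orP [/eqP Hp|Hp].
  subst x. rewrite eqxx rsum_ind0 //; lra.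
have -> : (p == x) = false. apply/negP => /eqP E; subst x; by rewrite Hp in Hx.
rewrite IH //; lra.
Qed.

Lemma rsum_sub_ind (T : eqType) (l P : seq T) g :
  uniq l -> uniq P -> {subset P <= l} ->
  rsum l (fun e => if e \in P then g e else 0) = rsum P g.
Proof.
move=> Hl; elim: P => [|p P IH].
  move=> _ _. rewrite (@rsum_ext _ l _ (fun _ => 0)) // rsum_const /rsum /=; lra.
move=> /= /andP [Hp HP] Hsub.
rewrite (@rsum_ext_in _ _ _ (fun e => (if p == e then g p else 0) + (if e \in P then g e else 0))).
  rewrite rsum_plus rsum_ind1 ?Hsub ?mem_head // IH // => z Hz.
  apply: Hsub; by rewrite in_cons Hz orbT.
move=> e _. rewrite in_cons. case: (eqVneq p e) => [E|Hne] /=.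
  subst e. case: ifP => H; last (rewrite ?eqxx /=; lra). by rewrite H in Hp.
lra.
Qed.

Lemma rsum_swap (A B : Type) (U : seq A) (J : seq B) (F : A -> B -> R) :
  rsum U (fun u => rsum J (F u)) = rsum J (fun j => rsum U (fun u => F u j)).
Proof.
elim: U => [|u U IH].
  rewrite (@rsum_ext _ J _ (fun _ => 0)) // rsum_const /rsum /=; lra.
rewrite rsum_cons IH -rsum_plus. apply: rsum_ext => j; by rewrite rsum_cons.
Qed.

Definition minl (X : Type) (f : X -> R) (x0 : X) (l : seq X) : X :=
  foldr (fun x m => if Rle_dec (f x) (f m) then x else m) x0 l.
Arguments minl {X} f x0 l.

Lemma minl_in (X : eqType) f (x0 : X) l : minl f x0 l \in x0 :: l.
Proof.
elim: l => [|x l IH] /=; first by rewrite mem_head.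
destruct (Rle_dec _ _); simpl; first by rewrite !in_cons eqxx orbT.
move: IH; rewrite !in_cons => /orP [->|->] //; by rewrite !orbT.
Qed.

Lemma minl_le (X : eqType) f (x0 : X) l z : z \in x0 :: l -> f (minl f x0 l) <= f z.
Proof.
elim: l => [|x l IH] /=.
  rewrite in_cons => /orP [/eqP ->|] //; lra.
rewrite !in_cons => /orP [/eqP Hz|/orP [/eqP Hz|Hz]].
- subst z. have := IH; rewrite in_cons eqxx => /(_ isT). destruct (Rle_dec _ _) as [H|H]; simpl; lra.
- subst z. destruct (Rle_dec _ _) as [H|H]; simpl; lra.
- have := IH; rewrite in_cons Hz orbT => /(_ isT). destruct (Rle_dec _ _) as [H|H]; simpl; lra.
Qed.

Fixpoint allseqs (E : finType) (n : nat) : seq (seq E) :=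
  match n with
  | 0 => [:: [::]]
  | n'.+1 => [::] :: [seq e :: p | e <- enum E, p <- allseqs E n']
  end.

Lemma allseqsP (E : finType) (n : nat) (p : seq E) : (size p <= n)%nat -> p \in allseqs E n.
Proof.
elim: n p => [|n IH] [|e p] //= Hs; rewrite ?in_cons ?eqxx //.
apply/orP; right.
apply: (allpairs_f (fun e p => e :: p)); [by rewrite mem_enum | exact: IH].
Qed.

Fixpoint psum (g : nat -> R) (n : nat) : R :=
  match n with 0 => 0 | k.+1 => psum g k + g k end.

Lemma rsum_iota m n g : rsum (iota m n) g = psum (fun k => g (m + k)%nat) n.
Proof.
elim: n => [|n IH]; first by rewrite /rsum /=. 
rewrite -[n.+1]addn1 iotaD rsum_cat IH addn1 /= /rsum /=; lra.
Qed.

Close Scope R_scope.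

Lemma psum_ext (g h : nat -> R) n : (forall k, g k = h k) -> psum g n = psum h n.
Proof. move=> H; elim: n => [|n IH] //=; by rewrite IH H. Qed.

Lemma size_le_sumn (E : Type) (ell : E -> nat) (P : seq E) :
  (forall e, (1 <= ell e)%N) -> (size P <= sumn (map ell P))%N.
Proof.
move=> H; elim: P => [|e P IH] //=. rewrite -add1n; exact: leq_add.
Qed.

Theorem mainTheorem8
  (V E : finType) (tl hd : E -> V)
  (Hsimple : injective (fun e => (tl e, hd e)))
  (c : E -> R) (Hc : forall e, (0 < c e)%R)
  (ell : E -> nat) (Hell : forall e, (1 <= ell e)%N)
  (s t : V) (Hst : s != t) (L : nat) (HL : (0 < L)%N)
  (HPL : exists P, in_PL tl hd ell s t L P)
  (beta : R) (Hbeta : is_LP_opt tl hd ell s t L c beta)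
  (eps w delta : R) (Heps : (0 < eps)%R) (Hw : (0 < w)%R) (Hdelta : (0 < delta)%R)
  (O : (E -> R) -> seq E) (HO : approx_oracle tl hd ell s t L w O)
  (i : nat) (Hi1 : (1 <= i)%N)
  (Hrun : forall j, (j < i)%N -> (alphabar O c eps delta j < 1 + w)%R) :
  forall a : R, is_dL tl hd ell s t L (yseq O c eps delta i) a ->
    (a <= delta * INR L * exp (eps * (1 + w) * fval O c eps delta i / beta))%R.
Proof.
move=> a Ha.
have [P0 HP0] := HPL.
pose y := yseq O c eps delta.
pose pc := fun n => path_cap c (O (y n)).
pose inP := in_PL tl hd ell s t L.
pose cand := filter inP (allseqs E L).
have sizeP : forall P, inP P -> (size P <= L)%N.
  move=> P /andP [_ HP]; exact: leq_trans (@size_le_sumn _ ell P Hell) HP.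
have uniqP : forall P, inP P -> uniq P.
  move=> P /andP [/and3P [_ _ Hu] _]; move: Hu => /= /andP [_ Hu]; exact: map_uniq Hu.
have candI : forall P, P \in P0 :: cand -> inP P.
  move=> P; rewrite in_cons => /orP [/eqP ->|] //; by rewrite mem_filter => /andP [].
have candP : forall P, inP P -> P \in P0 :: cand.
  move=> P HP; rewrite in_cons mem_filter HP allseqsP ?orbT //; exact: sizeP.
pose Pm := fun f : seq E -> R => minl f P0 cand.
have PmP : forall f, inP (Pm f) /\ forall P, inP P -> (f (Pm f) <= f P)%R.
  move=> f; split; first by apply: candI; apply: minl_in.
  move=> P HP; apply: minl_le; exact: candP.

have pc_ge0 : forall P, (0 <= path_cap c P)%R.
  case=> [|e P] /=; first lra.
  apply: Rlt_le; elim: P => [|e' P IH] /=; first exact: Hc.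
  apply: Rmin_pos; [exact: Hc | exact: IH].
have yS : forall n e, y n.+1 e = if e \in O (y n) then (y n e * (1 + eps * pc n / c e))%R else y n e.
  by [].
have ypos : forall n e, (delta <= y n e)%R.
  elim=> [|n IH] e; first by rewrite /y /=; lra.
  rewrite yS; case: ifP => _; last exact: IH.
  have h1 : (0 <= eps * pc n / c e)%R.
    apply: Rmult_le_pos; [apply: Rmult_le_pos; [lra | exact: pc_ge0] | left; apply: Rinv_0_lt_compat; exact: Hc].
  have := IH e; nra.
have ynn : forall n e, (0 <= y n e)%R by move=> n e; have := ypos n e; lra.
pose al := fun n => ylen (y n) (Pm (ylen (y n))).
have aldL : forall n, is_dL tl hd ell s t L (y n) (al n).
  move=> n; split; first by exists (Pm (ylen (y n))); split => //; exact: (PmP _).1.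
  exact: (PmP _).2.
have al_ge0 : forall n, (0 <= al n)%R.
  move=> n; apply: rsum_ge0; exact: ynn.
have orc : forall n, (ylen (y n) (O (y n)) <= (1 + w) * al n)%R.
  move=> n; have [_ H] := HO (y n) (ynn n); exact: H.
have orcP : forall n, inP (O (y n)).
  move=> n; have [H _] := HO (y n) (ynn n); exact: H.
pose D := fun n => LP_cost c (y n).
have Dstep : forall n, D n.+1 = (D n + eps * pc n * ylen (y n) (O (y n)))%R.
  move=> n; rewrite /D /LP_cost.
  rewrite (@rsum_ext _ _ _ (fun e => c e * y n e + (if e \in O (y n) then eps * pc n * y n e else 0))%R).
    rewrite rsum_plus rsum_sub_ind ?enum_uniq ?uniqP ?orcP // ?rsum_scal //.
    move=> e _; by rewrite mem_enum.
  move=> e; rewrite yS; case: ifP => _; last lra.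
  have := Hc e; move=> hc; field; lra.

have betapos : (0 < beta)%R.
  have [[yb [[Hyb0 Hyb1] Hcost]] _] := Hbeta.
  destruct (Rlt_le_dec 0 beta) as [|Hb] => //.
  have Hy0 : forall e, (yb e <= 0)%R.
    move=> e. have : (c e * yb e <= LP_cost c yb)%R.
      apply: (@rsum_term _ _ (fun e => c e * yb e)%R); last by rewrite mem_enum.
      move=> z; apply: Rmult_le_pos; [left; exact: Hc | exact: Hyb0].
    have := Hc e; have := Hyb0 e; nra.
  have := Hyb1 P0 HP0. have : (ylen yb P0 <= rsum P0 (fun _ => 0))%R by apply: rsum_le.
  rewrite rsum_const; lra.
have step5 : forall n, (al n <= delta * INR L + (D n - D 0%nat) / beta)%R.
  move=> n.
  pose z := fun e => (y n e - delta)%R.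
  have znn : forall e, (0 <= z e)%R by move=> e; rewrite /z; have := ypos n e; lra.
  pose Pz := Pm (ylen z).
  pose m := ylen z Pz.
  have [HPz Hmin] := PmP (ylen z).
  have m_ge0 : (0 <= m)%R by apply: rsum_ge0.
  have LPz : LP_cost c z = (D n - D 0%nat)%R.
    rewrite /D /LP_cost -rsum_minus; apply: rsum_ext => e; rewrite /z /=; ring.
  have X_ge0 : (0 <= LP_cost c z)%R.
    apply: rsum_ge0 => e; apply: Rmult_le_pos; [left; exact: Hc | exact: znn].
  have mle : (m <= (D n - D 0%nat) / beta)%R.
    rewrite -LPz.
    destruct (Rle_lt_or_eq_dec _ _ m_ge0) as [mpos|m0]; last first.
      rewrite -m0; apply: Rmult_le_pos => //; left; exact: Rinv_0_lt_compat.
    pose z' := fun e => (z e / m)%R.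
    have feas : LP_feasible tl hd ell s t L z'.
      split.
        move=> e; apply: Rmult_le_pos => //; left; exact: Rinv_0_lt_compat.
      move=> P HP. rewrite /ylen /z' rsum_div -/(ylen z P).
      have := Hmin P HP; rewrite -/Pz -/m => H.
      apply: (Rmult_le_reg_r m) => //. rewrite Rmult_1_l /Rdiv Rmult_assoc Rinv_l; lra.
    have Hb := (proj2 Hbeta) z' feas.
    have E1 : LP_cost c z' = (LP_cost c z / m)%R.
      rewrite /LP_cost -rsum_div; apply: rsum_ext => e; rewrite /z'; field; lra.
    rewrite E1 in Hb.
    have Hbm : (beta * m <= LP_cost c z)%R.
      have := Rmult_le_compat_r m _ _ (Rlt_le _ _ mpos) Hb.
      replace (LP_cost c z / m * m)%R with (LP_cost c z) by (field; lra). done.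
    apply: (Rmult_le_reg_l beta) => //.
    replace (beta * (LP_cost c z / beta))%R with (LP_cost c z) by (field; lra). lra.
  have h1 : (al n <= ylen (y n) Pz)%R by apply: (PmP _).2.
  have h2 : ylen (y n) Pz = (m + delta * INR (size Pz))%R.
    rewrite /m /ylen -rsum_const -rsum_plus; apply: rsum_ext => e; rewrite /z; ring.
  have h3 : (INR (size Pz) <= INR L)%R by apply: le_INR; apply/leP; exact: sizeP.
  nra.

pose S := psum (fun k => pc k * al k)%R.
have step6 : forall n, (D n - D 0%nat <= eps * (1 + w) * S n)%R.
  elim=> [|n IH]; first by rewrite /S /=; lra.
  rewrite Dstep /S /= -/(S n).
  have hp := pc_ge0 (O (y n)); rewrite -/(pc n) in hp.
  have h : (eps * pc n * ylen (y n) (O (y n)) <= eps * pc n * ((1 + w) * al n))%R.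
    apply: Rmult_le_compat_l; [apply: Rmult_le_pos; lra | exact: orc].
  nra.
pose K := (eps * (1 + w) / beta)%R.
have K_ge0 : (0 <= K)%R.
  apply: Rmult_le_pos; [apply: Rmult_le_pos; lra | left; exact: Rinv_0_lt_compat].
pose F := psum pc.
have alB : forall n, (al n <= delta * INR L + K * S n)%R.
  move=> n; have := step5 n; have := step6 n => h6 h5.
  have : ((D n - D 0%nat) / beta <= K * S n)%R.
    rewrite /K /Rdiv. 
    have hb : (0 <= / beta)%R by left; exact: Rinv_0_lt_compat.
    have := Rmult_le_compat_r _ _ _ hb h6. nra.
  lra.
have step8 : forall n, (delta * INR L + K * S n <= delta * INR L * exp (K * F n))%R.
  elim=> [|n IH].
    rewrite /S /F /= Rmult_0_r exp_0; lra.
  rewrite /S /F /= -/(S n) -/(F n).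
  pose B := (delta * INR L + K * S n)%R.
  have hal := alB n. rewrite -/B in hal IH.
  have hp := pc_ge0 (O (y n)); rewrite -/(pc n) in hp.
  have hKp : (0 <= K * pc n)%R by apply: Rmult_le_pos.
  have hB : (0 <= B)%R by have := al_ge0 n; lra.
  have e1 := exp_ineq1_le (K * pc n).
  have e2 : (B * (1 + K * pc n) <= delta * INR L * exp (K * F n) * exp (K * pc n))%R.
    apply: Rmult_le_compat => //; lra.
  rewrite (Rmult_plus_distr_l K (F n)) exp_plus.
  have : (K * pc n * al n <= K * pc n * B)%R by apply: Rmult_le_compat_l.
  rewrite /B in e2 |- *. nra.
have fvalE : fval O c eps delta i = F i.
  rewrite /fval /xflow rsum_swap.
  rewrite (@rsum_ext_in _ _ _ (fun j => path_cap c (chosen O c eps delta j))).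
    rewrite rsum_iota /F; apply: psum_ext => k. by rewrite add1n.
  move=> j Hj; apply: rsum_ind1; first exact: undup_uniq.
  by rewrite mem_undup map_f.
have Hai : (a <= al i)%R by apply: (proj2 Ha); exact: (PmP _).1.
have := step8 i; have := alB i.
replace (eps * (1 + w) * fval O c eps delta i / beta)%R with (K * F i)%R.
  lra.
rewrite fvalE /K; field; lra.
Qed.
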